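(* Let $\mathcal T$ be an orbital category. The monotone map $\upsilon:\mathrm{wIndSys}_{\mathcal T}\to\mathrm{Fam}_{\mathcal T}$ has a fully faithful left adjoint given by $\mathcal F\mapsto E^{\mathcal T}_{\mathcal F}\underline{\mathbb F}^0_{\mathcal F}$, the $\mathcal T$-weak indexing system whose $V$-value is $\{\emptyset_V,*_V\}$ (up to isomorphism) for $V\in\mathcal F$ and $\emptyset$ otherwise.
   Context: For a small category $\mathcal T$, $\mathbb F_{\mathcal T}$ is the full subcategory of $\mathrm{Fun}(\mathcal T^{op},\mathrm{Set})$ on finite coproducts of representables; $\mathcal T$ is orbital if $\mathbb F_{\mathcal T}$ has pullbacks. $\mathbb F_V:=\mathbb F_{\mathcal T,/V}$, $*_V$ terminal, $\emptyset_V$ initial; for $U\to V$, $\mathrm{Res}^V_U$ is pullback and $\mathrm{Ind}^V_U$ postcomposition. A full $\mathcal T$-subcategory assigns isomorphism-closed classes $\mathcal C_V\subseteq\mathrm{Ob}\,\mathbb F_V$ stable under restriction. For $S\in\mathbb F_V$ with orbits $U$ and $T_U\in\mathbb F_U$, $\coprod_U^ST_U:=\coprod_U\mathrm{Ind}_U^VT_U$. A $\mathcal T$-weak indexing system is a full $\mathcal T$-subcategory with $\mathcal C_V\neq\emptyset\Rightarrow *_V\in\mathcal C_V$ and closed under $\coprod^S_UT_U$ for $S\in\mathcal C_V$, $T_U\in\mathcal C_U$; $\mathrm{wIndSys}_{\mathcal T}$ is their poset under inclusion. A $\mathcal T$-family is a full subcategory $\mathcal F$ with $V\to W$, $W\in\mathcal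 F\Rightarrow V\in\mathcal F$; $\mathrm{Fam}_{\mathcal T}$ their poset. $\upsilon(\mathcal C)=\{V\mid\emptyset_V\in\mathcal C_V\}$. A monotone map $L$ is left adjoint to $\pi$ if $L(x)\le y\iff x\le\pi(y)$; fully faithful means order-reflecting. *)

(* Defs.v *)
From mathcomp Require Import all_boot.
Set Implicit Arguments. Unset Strict Implicit. Unset Printing Implicit Defensive.

Record smallcat := SmallCat {
  Ob : Type;
  Hm : Ob -> Ob -> Type;
  idm : forall a, Hm a a;
  cmp : forall a b d, Hm b d -> Hm a b -> Hm a d;
  cmp_idl : forall a b (f : Hm a b), cmp (idm b) f = f;
  cmp_idr : forall a b (f : Hm a b), cmp f (idm a) = f;
  cmp_assoc : forall a b c d (h : Hm c d) (g : Hm b c) (f : Hm a b),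
      cmp h (cmp g f) = cmp (cmp h g) f
}.
Arguments idm {s} a.
Arguments Hm {s}.
Arguments cmp {s a b d} _ _.

Section FT.
Variable T : smallcat.

(* F_T: finite coproducts of representables, presented as the free finite
   coproduct completion: an object is a finite family of objects of T; since
   Hom(y V, coprod_j y W_j) = coprod_j Hom(V, W_j), a morphism sends each
   summand i to a summand j together with a T-morphism. *)
Record fobj := FObj { fidx : finType; ffam : fidx -> Ob T }.
Arguments ffam : clear implicits.

Definition fhom (A B : fobj) :=
  forall i : fidx A, {j : fidx B & Hm (ffam A i) (ffam B j)}.

Definition fid (A : fobj) : fhom A A := fun i => existT _ i (idm _).
Arguments fid : clear implicits.

Definition fcomp (A B C : fobj) (g : fhom B C) (f : fhom A B) : fhom A C :=
  fun i => let: existT j a := f i in let: existT k b := g j in existT _ k (cmp b a).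

Definition feq (A B : fobj) (f g : fhom A B) := forall i, f i = g i.

Definition is_pullback (A B C P : fobj) (f : fhom A C) (g : fhom B C)
    (pa : fhom P A) (pb : fhom P B) : Prop :=
  feq (fcomp f pa) (fcomp g pb) /\
  forall (Q : fobj) (qa : fhom Q A) (qb : fhom Q B),
    feq (fcomp f qa) (fcomp g qb) ->
    exists u : fhom Q P,
      [/\ feq (fcomp pa u) qa, feq (fcomp pb u) qb &
          forall u' : fhom Q P, feq (fcomp pa u') qa -> feq (fcomp pb u') qb -> feq u' u].

Definition orbital : Prop :=
  forall (A B C : fobj) (f : fhom A C) (g : fhom B C),
    exists (P : fobj) (pa : fhom P A) (pb : fhom P B), is_pullback f g pa pb.

Definition rep (V : Ob T) : fobj := FObj (fun _ : unit => V).
Definition rep_hom (U V : Ob T) (g : Hm U V) : fhom (rep U) (rep V) :=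
  fun _ => existT _ tt g.

(* F_V = F_T / V *)
Record sobj (V : Ob T) := SObj { sdom : fobj; sstr : fhom sdom (rep V) }.
Arguments sstr {V} s i.

Definition siso (V : Ob T) (S S' : sobj V) : Prop :=
  exists (u : fhom (sdom S) (sdom S')) (v : fhom (sdom S') (sdom S)),
    [/\ feq (fcomp (sstr S') u) (sstr S), feq (fcomp (sstr S) v) (sstr S'),
        feq (fcomp v u) (fid _) & feq (fcomp u v) (fid _)].

Definition sterm (V : Ob T) : sobj V := SObj (fid (rep V)).
Definition fempty : fobj := FObj (fun i : void => match i with end).
Definition sinit (V : Ob T) : sobj V :=
  @SObj V fempty (fun i : void => match i with end).

(* R is (a choice of) Res^V_U S along g : U -> V, i.e. a pullback *)
Definition is_res (U V : Ob T) (g : Hm U V) (S : sobj V) (R : sobj U) : Prop :=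
  exists q : fhom (sdom R) (sdom S), is_pullback (sstr S) (rep_hom g) q (sstr R).

(* orbits of S in F_V: the summands U_i, with T_U_i in F_{U_i};
   coprod^S_U T_U := coprod_i Ind^V_{U_i} T_{U_i} *)
Definition orbit (V : Ob T) (S : sobj V) (i : fidx (sdom S)) : Ob T := ffam (sdom S) i.
Arguments orbit {V} S i.

Definition scoprod (V : Ob T) (S : sobj V) (Tf : forall i, sobj (orbit S i)) : sobj V :=
  @SObj V (FObj (fun x : {i : fidx (sdom S) & fidx (sdom (Tf i))} =>
                  ffam (sdom (Tf (tag x))) (tagged x)))
    (fun x => existT _ tt (cmp (projT2 (sstr S (tag x)))
                                (projT2 (sstr (Tf (tag x)) (tagged x))))).

Definition tsub := forall V : Ob T, sobj V -> Prop.

Definition full_tsub (C : tsub) : Prop :=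
  (forall V (S S' : sobj V), siso S S' -> C V S -> C V S') /\
  (forall U V (g : Hm U V) (S : sobj V) (R : sobj U), C V S -> is_res g S R -> C U R).

Definition weak_indexing_system (C : tsub) : Prop :=
  [/\ full_tsub C,
      (forall V, (exists S, C V S) -> C V (sterm V)) &
      (forall V (S : sobj V) (Tf : forall i, sobj (orbit S i)),
          C V S -> (forall i, C _ (Tf i)) -> C V (scoprod Tf))].

Definition tsub_le (C C' : tsub) : Prop := forall V S, C V S -> C' V S.

Definition Tfamily (F : Ob T -> Prop) : Prop :=
  forall V W (g : Hm V W), F W -> F V.

Definition fam_le (F F' : Ob T -> Prop) : Prop := forall V, F V -> F' V.

Definition upsilon (C : tsub) : Ob T -> Prop := fun V => C V (sinit V).

Definition EF0 (F : Ob T -> Prop) : tsub :=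
  fun V S => F V /\ (siso (sinit V) S \/ siso (sterm V) S).

End FT.

(* Main.v *)
Require Import Defs.
From mathcomp Require Import all_boot.
From Stdlib Require Eqdep_dec.
Set Implicit Arguments. Unset Strict Implicit. Unset Printing Implicit Defensive.

Lemma feq_refl (T : smallcat) (A B : fobj T) (f : fhom A B) : feq f f.
Proof. by []. Qed.
Lemma feq_sym (T : smallcat) (A B : fobj T) (f g : fhom A B) : feq f g -> feq g f.
Proof. by move=> H i; rewrite H. Qed.
Lemma feq_trans (T : smallcat) (A B : fobj T) (f g h : fhom A B) :
  feq f g -> feq g h -> feq f h.
Proof. by move=> H1 H2 i; rewrite H1 H2. Qed.
Lemma fcompA (T : smallcat) (A B C D : fobj T) (h : fhom C D) (g : fhom B C) (f : fhom A B) :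
  feq (fcomp h (fcomp g f)) (fcomp (fcomp h g) f).
Proof.
move=> i; rewrite /fcomp; case: (f i) => j a; case: (g j) => k b; case: (h k) => l c.
by rewrite cmp_assoc.
Qed.
Lemma fcomp1f (T : smallcat) (A B : fobj T) (f : fhom A B) : feq (fcomp (@fid T B) f) f.
Proof. by move=> i; rewrite /fcomp /fid; case: (f i) => j a; rewrite cmp_idl. Qed.
Lemma fcompf1 (T : smallcat) (A B : fobj T) (f : fhom A B) : feq (fcomp f (@fid T A)) f.
Proof. by move=> i; rewrite /fcomp /fid; case: (f i) => j a; rewrite cmp_idr. Qed.
Lemma fcompl (T : smallcat) (A B C : fobj T) (h : fhom B C) (f g : fhom A B) :
  feq f g -> feq (fcomp h f) (fcomp h g).
Proof. by move=> H i; rewrite /fcomp H. Qed.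
Lemma fcompr (T : smallcat) (A B C : fobj T) (h : fhom A B) (f g : fhom B C) :
  feq f g -> feq (fcomp f h) (fcomp g h).
Proof. by move=> H i; rewrite /fcomp; case: (h i) => j a; rewrite H. Qed.

Lemma siso_refl (T : smallcat) (V : Ob T) (S : sobj V) : siso S S.
Proof.
exists (@fid T _), (@fid T _); split; try exact: fcompf1; exact: fcomp1f.
Qed.

Lemma siso_trans (T : smallcat) (V : Ob T) (A S S' : sobj V) :
  siso A S -> siso S S' -> siso A S'.
Proof.
move=> [u1 [v1 [a1 b1 c1 d1]]] [u2 [v2 [a2 b2 c2 d2]]].
exists (fcomp u2 u1), (fcomp v1 v2); split.
- apply: feq_trans (fcompA _ _ _) _; apply: feq_trans (fcompr _ a2) a1.
- apply: feq_trans (fcompA _ _ _) _; apply: feq_trans (fcompr _ b1) b2.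
- apply: feq_trans (fcompA _ _ _) _.
  apply: feq_trans (fcompr _ (feq_sym (fcompA _ _ _))) _.
  apply: feq_trans (fcompr _ (fcompl _ c2)) _.
  apply: feq_trans (fcompr _ (fcompf1 _)) c1.
- apply: feq_trans (fcompA _ _ _) _.
  apply: feq_trans (fcompr _ (feq_sym (fcompA _ _ _))) _.
  apply: feq_trans (fcompr _ (fcompl _ d1)) _.
  apply: feq_trans (fcompr _ (fcompf1 _)) d2.
Qed.

Lemma init_empty (T : smallcat) (V : Ob T) (S : sobj V) :
  siso (sinit V) S -> fidx (sdom S) -> False.
Proof. by move=> [u [v _]] i; case: (projT1 (v i)). Qed.

Lemma empty_init (T : smallcat) (V : Ob T) (S : sobj V) :
  (fidx (sdom S) -> False) -> siso (sinit V) S.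
Proof.
move=> H.
exists (fun i : void => match i with end), (fun i => match H i with end).
by split => i; [case: i | case: (H i) | case: i | case: (H i)].
Qed.

Lemma term_char (T : smallcat) (V : Ob T) (S : sobj V) :
  siso (sterm V) S <->
  exists u : fhom (rep V) (sdom S),
    feq (fcomp (@sstr _ _ S) u) (@fid T _) /\ feq (fcomp u (@sstr _ _ S)) (@fid T _).
Proof.
split.
- move=> [u [v [a b c d]]]; exists u; split => //.
  have e : feq v (@sstr _ _ S) := feq_trans (feq_sym (fcomp1f _)) b.
  exact: feq_trans (fcompl _ (feq_sym e)) d.
- move=> [u [a b]]; exists u, (@sstr _ _ S); split => //.
  exact: fcomp1f.
Qed.

Lemma pair2 (A : finType) (P : A -> Type) p (x y : P p) : existT P p x = existT P p y -> x = y.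
Proof. exact: Eqdep_dec.inj_pair2_eq_dec _ (@eq_comparable _) P p x y. Qed.
Lemma pair2u (P : unit -> Type) p (x y : P p) : existT P p x = existT P p y -> x = y.
Proof. apply: Eqdep_dec.inj_pair2_eq_dec => a c; left; by case: a; case: c. Qed.

Lemma res_term (T : smallcat) (U V : Ob T) (g : Hm U V) (S : sobj V) (R : sobj U) :
  siso (sterm V) S -> is_res g S R -> siso (sterm U) R.
Proof.
move/term_char=> [w [a b]] [q [pc pu]].
have hc : feq (fcomp (@sstr _ _ S) (fcomp w (rep_hom g))) (fcomp (rep_hom g) (@fid T _)).
  apply: feq_trans (fcompA _ _ _) _; apply: feq_trans (fcompr _ a) _.
  apply: feq_trans (fcomp1f _) _; exact: feq_sym (fcompf1 _).
have [u [u1 u2 _]] := pu _ _ _ hc.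
apply/term_char; exists u; split => //.
have [u0 [_ _ uniq]] := pu _ q (@sstr _ _ R) pc.
apply: feq_trans (feq_sym (uniq (@fid T _) (fcompf1 _) (fcompf1 _))).
apply: uniq.
- apply: feq_trans (fcompA _ _ _) _; apply: feq_trans (fcompr _ u1) _.
  apply: feq_trans (feq_sym (fcompA _ _ _)) _.
  apply: feq_trans (fcompl _ (feq_sym pc)) _.
  apply: feq_trans (fcompA _ _ _) _; apply: feq_trans (fcompr _ b) _.
  exact: fcomp1f.
- apply: feq_trans (fcompA _ _ _) _; apply: feq_trans (fcompr _ u2) _.
  exact: fcomp1f.
Qed.

Lemma res_init (T : smallcat) (U V : Ob T) (g : Hm U V) (S : sobj V) (R : sobj U) :
  siso (sinit V) S -> is_res g S R -> siso (sinit U) R.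
Proof.
move=> /init_empty H [q _]; apply: empty_init => i; exact: H (projT1 (q i)).
Qed.

Lemma coprod_init (T : smallcat) (V : Ob T) (S : sobj V)
  (Tf : forall i, sobj (Defs.orbit (S:=S) i)) :
  siso (sinit V) S -> siso (sinit V) (scoprod Tf).
Proof. by move=> /init_empty H; apply: empty_init => x; exact: H (tag x). Qed.

Lemma coprod_term (T : smallcat) (V : Ob T) (S : sobj V)
  (Tf : forall i, sobj (Defs.orbit (S:=S) i)) :
  siso (sterm V) S ->
  (forall i, siso (sinit _) (Tf i) \/ siso (sterm _) (Tf i)) ->
  siso (sinit V) (scoprod Tf) \/ siso (sterm V) (scoprod Tf).
Proof.
move/term_char=> [u [a b]] HT.
case E: (u tt) => [i0 h].
have bi : forall i, i = i0.
  move=> i; move: (b i); rewrite /fcomp; case: (@sstr _ _ S i) => [[] s].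
  by rewrite E => /(congr1 (@projT1 _ _)) /= ->.
have bh : cmp h (projT2 (@sstr _ _ S i0)) = idm _.
  move: (b i0); rewrite /fcomp /fid; case: (@sstr _ _ S i0) => [[] s] /=.
  by rewrite E => HH; exact: pair2 HH.
have ah : cmp (projT2 (@sstr _ _ S i0)) h = idm _.
  move: (a tt); rewrite /fcomp /fid E; case: (@sstr _ _ S i0) => [[] s] /=.
  by move=> HH; exact: pair2 HH.
case: (HT i0) => [HI|].
  left; apply: empty_init => -[i j]; move: j; rewrite (bi i) => j.
  exact: init_empty HI j.
move/term_char=> [u' [a' b']].
case E': (u' tt) => [j0 h'].
have bj : forall j, j = j0.
  move=> j; move: (b' j); rewrite /fcomp; case: (@sstr _ _ (Tf i0) j) => [[] s].
  by rewrite E' => /(congr1 (@projT1 _ _)) /= ->.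
have bh' : cmp h' (projT2 (@sstr _ _ (Tf i0) j0)) = idm _.
  move: (b' j0); rewrite /fcomp /fid; case: (@sstr _ _ (Tf i0) j0) => [[] s] /=.
  by rewrite E' => HH; exact: pair2 HH.
have ah' : cmp (projT2 (@sstr _ _ (Tf i0) j0)) h' = idm _.
  move: (a' tt); rewrite /fcomp /fid E'; case: (@sstr _ _ (Tf i0) j0) => [[] s] /=.
  by move=> HH; exact: pair2 HH.
right; apply/term_char.
exists (fun t => existT (fun x : fidx (sdom (scoprod Tf)) =>
          Hm (@ffam _ (rep V) t) (@ffam _ (sdom (scoprod Tf)) x))
          (existT (fun i => fidx (sdom (Tf i))) i0 j0) (cmp h' h)).
split.
  case=> /=; rewrite /fcomp /fid /=.
  congr existT.
  by rewrite cmp_assoc -(cmp_assoc (projT2 (@sstr _ _ S i0))) ah' cmp_idr ah.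
case=> i j; move: j; rewrite (bi i) => j; rewrite (bj j).
rewrite /fcomp /fid /=; congr existT.
by rewrite -cmp_assoc (cmp_assoc h) bh cmp_idl bh'.
Qed.

Lemma res_sinit (T : smallcat) (U V : Ob T) (g : Hm U V) : is_res g (sinit V) (sinit U).
Proof.
exists (fun i : void => match i with end); split; first by case.
move=> Q qa qb _.
exists (fun i => match projT1 (qa i) with end).
by split => [i|i|u' _ _ i]; case: (projT1 (qa i)).
Qed.

Theorem mainTheorem13 (T : smallcat) (horb : orbital T) :
  (* upsilon is a well-defined monotone map wIndSys_T -> Fam_T *)
  (forall C : tsub T, weak_indexing_system C -> Tfamily (upsilon C)) /\
  (forall C C' : tsub T, weak_indexing_system C -> weak_indexing_system C' ->
      tsub_le C C' -> fam_le (upsilon C) (upsilon C')) /\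
  (* F |-> E_F F^0_F is a well-defined monotone map Fam_T -> wIndSys_T *)
  (forall F : Ob T -> Prop, Tfamily F -> weak_indexing_system (EF0 F)) /\
  (forall F F' : Ob T -> Prop, Tfamily F -> Tfamily F' ->
      fam_le F F' -> tsub_le (EF0 F) (EF0 F')) /\
  (* it is left adjoint to upsilon *)
  (forall (F : Ob T -> Prop) (C : tsub T), Tfamily F -> weak_indexing_system C ->
      (tsub_le (EF0 F) C <-> fam_le F (upsilon C))) /\
  (* and fully faithful (order-reflecting) *)
  (forall F F' : Ob T -> Prop, Tfamily F -> Tfamily F' ->
      tsub_le (EF0 F) (EF0 F') -> fam_le F F').
Proof.
split.
  move=> C [[_ Hres] _ _] V W g HW; exact: Hres _ _ g _ _ HW (res_sinit g).
split.
  move=> C C' _ _ H V; exact: H.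
split.
  move=> F HF; split.
  - split.
      move=> V S S' H [HV [H1|H1]]; split => //; [left|right]; exact: siso_trans H1 H.
    move=> U V g S R [HV H1] Hr; split; first exact: HF _ _ g HV.
    case: H1 => H1; [left; exact: res_init H1 Hr | right; exact: res_term H1 Hr].
  - move=> V [S [HV _]]; split => //; right; exact: siso_refl.
  - move=> V S Tf [HV [H1|H1]] HT; split => //.
      by left; exact: coprod_init.
    apply: coprod_term H1 _ => i; by case: (HT i).
split.
  move=> F F' _ _ H V S [HV HS]; split => //; exact: H.
split.
  move=> F C HF [[Hiso _] Hterm _]; split.
    move=> H V HV; apply: H; split => //; left; exact: siso_refl.
  move=> H V S [HV [H1|H1]].
    exact: Hiso _ _ _ H1 (H V HV).
  apply: Hiso _ _ _ H1 _; apply: Hterm; exists (sinit V); exact: H.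
move=> F F' _ _ H V HV.
have [] := H V (sinit V) (conj HV (or_introl (siso_refl _))) => //.
Qed.
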